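(* Let $G=\langle \mathcal{V},E\rangle$ be a finite undirected graph, let $m\ge 1$ be the number of pursuers, let $f:\mathcal{V}^m\times\mathcal{V}\to\{0,1\}$ be a termination function, and let $\gamma\in(0,1)$. Consider the no-exit pursuit-evasion Markov game on $G$ described in the context, and let $D:\mathcal{V}^m\times\mathcal{V}\to\mathbb{N}\cup\{\infty\}$ and the policies $\mu,\nu$ be the output of the dynamic programming algorithm described in the context. If this game admits a pure-strategy Nash equilibrium, then for every state $s=(s_p,s_e)$ the Nash value satisfies $V^*(s)=\gamma^{D(s_p,s_e)}$, and the joint policy $(\mu,\nu)$ is a Nash equilibrium of the game.
   Context: For a node $v\in\mathcal{V}$, $\mathrm{Neighbor}(v)$ denotes the set of nodes adjacent to $v$ together with $v$ itself. For $s_p=(v^1,\dots,v^m)\in\mathcal{V}^m$, $\mathrm{Neighbor}(s_p)=\mathrm{Neighbor}(v^1)\times\cdots\times\mathrm{Neighbor}(v^m)\subseteq\mathcal{V}^m$. Game: a two-player zero-sum Markov game with state space $S=\mathcal{V}^m\times\mathcal{V}$; a state $s=(s_p,s_e)$ lists the positions $s_p=(v_p^1,\dots,v_p^m)$ of the $m$ pursuers (together the max-player) and the position $s_e=v_e$ of the evader (the min-player). At each step both players move simultaneously: the pursuer team chooses $a\in\mathrm{Neighbor}(s_p)$ and the evader chooses $b\in\mathrm{Neighbor}(s_e)$; the transition is deterministic to the state $(a,b)$. States with $f(s_p,s_e)=1$ are terminal: the game ends there with reward $+1$ to the pursuers; all other rewards are $0$; the discount factor is $\gamma$. Thus the Nash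 value $V^*$ satisfies $V^*(s)=1$ if $f(s)=1$, and otherwise $V^*(s)=\max_{\mu(s)\in\Delta(\mathcal{A})}\min_{b}\sum_a\mu(s,a)\,\gamma V^*(a,b)$. A Nash equilibrium $(\mu^*,\nu^* )$ satisfies $V^{\mu,\nu^*}\le V^{\mu^*,\nu^*}\le V^{\mu^*,\nu}$ at all states for all policies $\mu,\nu$; a pure-strategy Nash equilibrium is one in which both policies are deterministic. We use the convention $\gamma^{\infty}=0$. Algorithm: Initialize an empty FIFO queue $\mathcal{Q}$ and set $D\equiv\infty$. For every $(s_p,s_e)$ with $f(s_p,s_e)=1$, set $D(s_p,s_e)=0$ and push $(s_p,s_e)$ into $\mathcal{Q}$. While $\mathcal{Q}$ is nonempty: pop the first element $(s_p,s_e)$; for each $n_e\in\mathrm{Neighbor}(s_e)$ such that there is no $n_e'\in\mathrm{Neighbor}(n_e)$ with $D(s_p,n_e')>D(s_p,s_e)$, and for each $n_p\in\mathrm{Neighbor}(s_p)$ with $D(n_p,n_e)=\infty$, set $D(n_p,n_e)=D(s_p,s_e)+1$ and push $(n_p,n_e)$ into $\mathcal{Q}$. Finally, for every state $(s_p,s_e)$, define the pursuer policy $\mu(s_p,s_e)\in\arg\min_{n_p\in\mathrm{Neighbor}(s_p)}\max_{n_e\in\mathrm{Neighbor}(s_e)}D(n_p,n_e)$ and the evader policy $\nu(s_p,s_e)\in\arg\max_{n_e\in\mathrm{Neighbor}(s_e)}\min_{n_p\in\mathrm{Neighbor}(s_p)}D(n_p,n_e)$ (both deterministic). *)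

(* Defs.v *)
From HB Require Import structures.
From mathcomp Require Import all_boot all_order all_algebra.
From mathcomp Require Import all_classical all_reals all_analysis.
Set Implicit Arguments. Unset Strict Implicit. Unset Printing Implicit Defensive.
Import Order.TTheory GRing.Theory Num.Theory.
Import numFieldNormedType.Exports.
Local Open Scope ring_scope.

(* ---------- extended naturals N ∪ {∞}, encoded as option nat (None = ∞) ---------- *)
Definition leo (x y : option nat) : bool :=
  match x, y with
  | _, None => true
  | None, Some _ => false
  | Some a, Some b => (a <= b)%N
  end.
Definition gto (x y : option nat) : bool := ~~ leo x y.
Definition omax (x y : option nat) := if leo x y then y else x.
Definition omin (x y : option nat) := if leo x y then x else y.

Definition gpow {R : numDomainType} (gamma : R) (d : option nat) : R :=
  if d is Some n then gamma ^+ n else 0.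

Section Game.
Variable V : finType.
Variable adj : rel V.
Variable m : nat.

Local Notation pos := {ffun 'I_m -> V}.
Local Notation state := (pos * V)%type.

Definition nbr (v : V) (w : V) : bool := (w == v) || adj v w.
Definition nbrP (sp : pos) (a : pos) : bool := [forall i, nbr (sp i) (a i)].

Variable f : state -> bool.

Definition Dmap := state -> option nat.

Definition upd (D : Dmap) (t : state) (k : option nat) : Dmap :=
  fun s => if s == t then k else D s.

Definition expand_np (sp : pos) (ne : V) (k1 : option nat)
    (DQ : Dmap * seq state) (np : pos) : Dmap * seq state :=
  let: (D, Q) := DQ in
  if nbrP sp np && (D (np, ne) == None)
  then (upd D (np, ne) k1, rcons Q (np, ne))
  else (D, Q).

Definition expand_ne (sp : pos) (se : V) (k : option nat)
    (DQ : Dmap * seq state) (ne : V) : Dmap * seq state :=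
  let: (D, Q) := DQ in
  if nbr se ne && ~~ [exists ne', nbr ne ne' && gto (D (sp, ne')) k]
  then foldl (expand_np sp ne (omap succn k)) (D, Q) (enum pos)
  else (D, Q).

Definition bfs_step (DQ : Dmap * seq state) : Dmap * seq state :=
  let: (D, Q) := DQ in
  match Q with
  | [::] => (D, Q)
  | (sp, se) :: Q' => foldl (expand_ne sp se (D (sp, se))) (D, Q') (enum V)
  end.

Definition D_init : Dmap := fun s => if f s then Some 0%N else None.
Definition Q_init : seq state := [seq s <- enum {: state} | f s].

(* Each state is pushed at most once, so at most #|state| iterations occur;
   further iterations on the empty queue are the identity. *)
Definition Dalg : Dmap := (iter #|{: state}| bfs_step (D_init, Q_init)).1.

Definition maxD (D : Dmap) (np : pos) (se : V) : option nat :=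
  \big[omax/Some 0%N]_(ne | nbr se ne) D (np, ne).
Definition minD (D : Dmap) (sp : pos) (ne : V) : option nat :=
  \big[omin/None]_(np | nbrP sp np) D (np, ne).

Definition is_mu_of (D : Dmap) (mu : state -> pos) : Prop :=
  forall s, nbrP s.1 (mu s) /\
    forall np, nbrP s.1 np -> leo (maxD D (mu s) s.2) (maxD D np s.2).
Definition is_nu_of (D : Dmap) (nu : state -> V) : Prop :=
  forall s, nbr s.2 (nu s) /\
    forall ne, nbr s.2 ne -> leo (minD D s.1 ne) (minD D s.1 (nu s)).

Variable R : realType.

Definition pursuer_policy (mu : state -> pos -> R) : Prop :=
  forall s, (forall a, 0 <= mu s a) /\ (forall a, mu s a != 0 -> nbrP s.1 a)
            /\ \sum_(a : pos) mu s a = 1.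
Definition evader_policy (nu : state -> V -> R) : Prop :=
  forall s, (forall b, 0 <= nu s b) /\ (forall b, nu s b != 0 -> nbr s.2 b)
            /\ \sum_(b : V) nu s b = 1.

Definition det_pol {T : eqType} (p : state -> T) : state -> T -> R :=
  fun s a => (a == p s)%:R.

(* n-step value: expected discounted reward gamma^T * 1{T <= n}, where T is
   the hitting time of the terminal set (terminal states give reward 1). *)
Fixpoint Vn (gamma : R) (mu : state -> pos -> R) (nu : state -> V -> R)
    (n : nat) (s : state) : R :=
  if f s then 1 else
  match n with
  | 0 => 0
  | n'.+1 => gamma * \sum_(a : pos) \sum_(b : V) mu s a * nu s b * Vn gamma mu nu n' (a, b)
  end.

Definition value (gamma : R) (mu : state -> pos -> R) (nu : state -> V -> R)
    (s : state) : R := limn (fun n => Vn gamma mu nu n s).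

Definition is_NE (gamma : R) (mu : state -> pos -> R) (nu : state -> V -> R) : Prop :=
  pursuer_policy mu /\ evader_policy nu /\
  forall mu' nu', pursuer_policy mu' -> evader_policy nu' ->
    forall s, value gamma mu' nu s <= value gamma mu nu s /\
              value gamma mu nu s <= value gamma mu nu' s.

Definition has_pure_NE (gamma : R) : Prop :=
  exists (pmu : state -> pos) (pnu : state -> V),
    is_NE gamma (det_pol pmu) (det_pol pnu).

End Game.

(* Main.v *)
Require Import Defs.
From HB Require Import structures.
From mathcomp Require Import all_boot all_order all_algebra.
From mathcomp Require Import all_classical all_reals all_analysis.
Import Order.TTheory GRing.Theory Num.Theory.
Import numFieldNormedType.Exports.
Local Open Scope ring_scope.
Set Implicit Arguments. Unset Strict Implicit. Unset Printing Implicit Defensive.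

Lemma leo_refl x : leo x x.
Proof. by case: x => //= n; rewrite leqnn. Qed.
Lemma leo_None x : leo x None.
Proof. by case: x. Qed.
Lemma leo_trans y x z : leo x y -> leo y z -> leo x z.
Proof. by case: x y z => [x|] [y|] [z|] //=; apply: leq_trans. Qed.
Lemma leo_total x y : leo x y || leo y x.
Proof. by case: x y => [x|] [y|] //=; apply: leq_total. Qed.
Lemma leoS x y : leo (omap succn x) (omap succn y) = leo x y.
Proof. by case: x y => [x|] [y|]. Qed.
Lemma gto_succ k : gto (omap succn k) k = gto None k.
Proof. by case: k => [k|] //=; rewrite /gto /= ltnn. Qed.

Section BFS.
Variable V : finType.
Variable adj : rel V.
Variable m : nat.
Hypothesis adj_sym : symmetric adj.
Local Notation pos := {ffun 'I_m -> V}.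
Local Notation state := (pos * V)%type.
Variable f : state -> bool.

Lemma nbr_sym v w : nbr adj v w = nbr adj w v.
Proof. by rewrite /nbr eq_sym adj_sym. Qed.
Lemma nbrP_sym (a b : pos) : nbrP adj a b = nbrP adj b a.
Proof.
by apply/forallP/forallP => H i; rewrite nbr_sym; apply: H.
Qed.

Lemma inner_fold sp ne k1 (Dc : Dmap V m) Qc (l : seq pos) : uniq l ->
 (foldl (expand_np adj sp ne k1) (Dc,Qc) l).1 =
   (fun x => if (x.2 == ne) && (x.1 \in l) && nbrP adj sp x.1 && (Dc x == None) then k1 else Dc x) /\
 exists P, (foldl (expand_np adj sp ne k1) (Dc,Qc) l).2 = Qc ++ P /\ uniq P /\
   forall x, (x \in P) = (x.2 == ne) && (x.1 \in l) && nbrP adj sp x.1 && (Dc x == None).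
Proof.
elim/last_ind: l => [|l np IH].
  move=> _; split; first by apply: boolp.funext => x /=; rewrite in_nil andbF.
  by exists [::]; rewrite cats0; split=> //; split=> // x; rewrite in_nil andbF.
rewrite rcons_uniq => /andP [npl ul]; have [E1 [P [E2 [uP mP]]]] := IH ul.
rewrite foldl_rcons; set r := foldl _ _ _ in E1 E2 *; case: r E1 E2 => D1 Q1 /= -> ->.
rewrite /expand_np /= (negbTE npl) andbF /=.
case: ifP => [/andP [Hn /eqP HD]|Hc] /=.
  split.
    apply: boolp.funext => -[a b] /=; rewrite /upd mem_rcons in_cons xpair_eqE.
    case: (eqVneq a np) => [->|anp] /=; first by case: (eqVneq b ne) => //= ->; rewrite Hn HD eqxx.
    by [].
  exists (rcons P (np,ne)); split; first by rewrite -!cats1 catA.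
  split; first by rewrite rcons_uniq uP andbT mP /= (negbTE npl) andbF.
  move=> [a b]; rewrite mem_rcons in_cons mP mem_rcons in_cons xpair_eqE /=.
  case: (eqVneq a np) => [->|anp] /=; last by [].
  by rewrite (negbTE npl) andbF orbF /=; case: (eqVneq b ne) => //= ->; rewrite Hn HD eqxx.
split.
  apply: boolp.funext => -[a b] /=; rewrite mem_rcons in_cons.
  case: (eqVneq a np) => [->|anp] //=; case: (eqVneq b ne) => //= ->.
  by rewrite (negbTE npl) /= Hc.
exists P; split => //; split => // -[a b]; rewrite mP mem_rcons in_cons /=.
case: (eqVneq a np) => [->|anp] //=; rewrite (negbTE npl) /=; case: (eqVneq b ne) => //= ->.
by rewrite Hc.
Qed.

Definition newD sp se k (D : Dmap V m) (x : state) : bool :=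
  nbr adj se x.2 && ~~ [exists ne', nbr adj x.2 ne' && gto (D (sp, ne')) k]
  && nbrP adj sp x.1 && (D x == None).

Lemma newD_None sp se k D x : newD sp se k D x -> D x = None.
Proof. by case/andP => _ /eqP. Qed.

Lemma outer_fold sp se k (D : Dmap V m) Q0 (l : seq V) : uniq l ->
 (foldl (expand_ne adj sp se k) (D,Q0) l).1 =
   (fun x => if (x.2 \in l) && newD sp se k D x then omap succn k else D x) /\
 exists P, (foldl (expand_ne adj sp se k) (D,Q0) l).2 = Q0 ++ P /\ uniq P /\
   forall x, (x \in P) = (x.2 \in l) && newD sp se k D x.
Proof.
elim/last_ind: l => [|l ne IH].
  move=> _; split; first by apply: boolp.funext => x /=.
  by exists [::]; rewrite cats0; split=> //; split=> // x; rewrite in_nil.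
rewrite rcons_uniq => /andP [nel ul]; have [E1 [P [E2 [uP mP]]]] := IH ul.
rewrite foldl_rcons; set r := foldl _ _ _ in E1 E2 *; case: r E1 E2 => D1 Q1 /= E1 E2.
have gE : forall y, gto (D1 y) k = gto (D y) k.
  move=> y; rewrite E1; case: ifP => // /andP [_ /newD_None ->]; exact: gto_succ.
have exE : [exists ne', nbr adj ne ne' && gto (D1 (sp, ne')) k] =
           [exists ne', nbr adj ne ne' && gto (D (sp, ne')) k].
  by apply: eq_existsb => ne'; rewrite gE.
rewrite /expand_ne exE E2.
case: (boolP (nbr adj se ne && ~~ [exists ne', nbr adj ne ne' && gto (D (sp, ne')) k])) => Hc.
  have [F1 [P2 [F2 [uP2 mP2]]]] := inner_fold sp ne (omap succn k) D1 (Q0 ++ P) (enum_uniq pos).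
  split.
    rewrite F1; apply: boolp.funext => -[a b] /=; rewrite mem_enum mem_rcons in_cons E1 /=.
    case: (eqVneq b ne) => [->|bne] /=; last by [].
    rewrite (negbTE nel) /= /newD /=; move: Hc; rewrite /= => /andP [-> ->] /=.
    by case: (nbrP adj sp a); case: (D (a, ne)).
  exists (P ++ P2); rewrite F2 catA; split => //; split.
    rewrite cat_uniq uP uP2 andbT /=; apply/hasPn => x; rewrite mP2 => /andP [/andP [/andP [/eqP xe _] _] _].
    by rewrite mP xe (negbTE nel).
  move=> [a b]; rewrite mem_cat mP mP2 mem_rcons in_cons /= mem_enum E1 /=.
  case: (eqVneq b ne) => [->|bne] /=; last by rewrite orbF.
  rewrite (negbTE nel) /= /newD /=; move: Hc; rewrite /= => /andP [-> ->] /=.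
  by case: (nbrP adj sp a).
split.
  apply: boolp.funext => -[a b] /=; rewrite mem_rcons in_cons E1 /=.
  case: (eqVneq b ne) => [->|bne] //=.
  rewrite (negbTE nel) /= /newD /=.
  by rewrite (negbTE Hc).
exists P; split => //; split => // -[a b]; rewrite mP mem_rcons in_cons /=.
case: (eqVneq b ne) => [->|bne] //=; rewrite (negbTE nel) /newD /=.
by rewrite (negbTE Hc).
Qed.

Lemma step_char (D : Dmap V m) sp se Qt :
 (bfs_step adj (D, (sp,se)::Qt)).1 =
   (fun x => if newD sp se (D (sp,se)) D x then omap succn (D (sp,se)) else D x) /\
 exists P, (bfs_step adj (D, (sp,se)::Qt)).2 = Qt ++ P /\ uniq P /\
   forall x, (x \in P) = newD sp se (D (sp,se)) D x.
Proof.
rewrite /bfs_step; have [E1 [P [E2 [uP mP]]]] :=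
  outer_fold sp se (D (sp,se)) D Qt (enum_uniq V).
split; first by rewrite E1; apply: boolp.funext => x; rewrite mem_enum.
by exists P; split => //; split => // x; rewrite mP mem_enum.
Qed.

Lemma pairwise_all (T : eqType) (r : rel T) (s : seq T) :
  (forall x y, x \in s -> y \in s -> r x y) -> pairwise r s.
Proof.
elim: s => //= x s IH H; apply/andP; split.
  by apply/allP => y ys; apply: H; rewrite in_cons ?eqxx ?ys ?orbT.
by apply: IH => a b a_s b_s; apply: H; rewrite in_cons ?a_s ?b_s orbT.
Qed.

Definition Qok (D : Dmap V m) (Q : seq state) : Prop :=
  exists k, (forall x, x \in Q -> exists2 d, D x = Some d & (k <= d <= k.+1)%N) /\
    pairwise (fun x y => leo (D x) (D y)) Q /\
    (forall y, D y != None -> y \notin Q -> leo (D y) (Some k)).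

Record Inv (D : Dmap V m) (Q : seq state) : Prop := {
  I0 : forall x, (D x == Some 0%N) = f x;
  I1 : uniq Q;
  I2 : forall x, x \in Q -> D x != None;
  I3 : Qok D Q;
  I4 : forall x k, D x = Some k.+1 ->
         exists2 a, nbrP adj x.1 a & forall b, nbr adj x.2 b -> leo (D (a,b)) (Some k);
  I5 : forall x k, D x = Some k -> x \notin Q -> forall ne, nbr adj x.2 ne ->
         (forall ne', nbr adj ne ne' -> leo (D (x.1,ne')) (Some k)) ->
         forall np, nbrP adj x.1 np -> leo (D (np,ne)) (Some k.+1) }.

Definition proc (D : Dmap V m) (Q : seq state) := [set x | (D x != None) && (x \notin Q)].

Lemma step_inv D sp se Qt : Inv D ((sp,se)::Qt) ->
  Inv (bfs_step adj (D, (sp,se)::Qt)).1 (bfs_step adj (D, (sp,se)::Qt)).2 /\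
  #|proc (bfs_step adj (D, (sp,se)::Qt)).1 (bfs_step adj (D, (sp,se)::Qt)).2| =
  #|proc D ((sp,se)::Qt)|.+1.
Proof.
move=> [J0 J1 J2 J3 J4 J5]; set h := (sp,se).
have [E1 [P [E2 [uP mP]]]] := step_char D sp se Qt.
move: (bfs_step adj (D, h::Qt)) E1 E2 => [D' Q'] /= E1 E2; subst Q'.
have := J2 h (mem_head _ _); case Dh: (D h) => [k0|] // _.
rewrite -/h Dh in E1 mP.
set nw := newD sp se (Some k0) D in E1 mP.
have nwN : forall x, nw x -> D x = None by move=> x /newD_None.
have Dmono : forall x, D x != None -> D' x = D x.
  by move=> x Hx; rewrite E1; case: ifP => // /nwN E; rewrite E in Hx.
have Dnw : forall x, nw x -> D' x = Some k0.+1 by move=> x Hx; rewrite E1 Hx.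
have Dnnw : forall x, ~~ nw x -> D' x = D x by move=> x /negbTE Hx; rewrite E1 Hx.
have [kq [Qin [pw Qproc]]] := J3.
have [d0 Dh0 /andP [kqk0 k0kq]] := Qin h (mem_head _ _); rewrite Dh in Dh0; case: Dh0 => Ed0; subst d0.
move: pw; rewrite pairwise_cons => /andP [/allP pwh pwt].
move: J1; rewrite cons_uniq => /andP [hQt uQt].
have bound : forall x d, D x = Some d -> (d <= k0.+1)%N.
  move=> x d Dx; case: (boolP (x \in h::Qt)) => xQ.
    by have [d' Dx' /andP [_ H]] := Qin x xQ; rewrite Dx in Dx'; case: Dx' => ->; apply: leq_trans H _.
  have := Qproc x; rewrite Dx => /(_ isT xQ) /= H; apply: leq_trans H _; exact: leq_trans kqk0 (leqnSn _).
have leoD' : forall y j, leo (D' y) (Some j) -> (j <= k0)%N -> leo (D y) (Some j).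
  move=> y j; case: (boolP (nw y)) => [/Dnw -> /= H /(leq_trans H)|/Dnnw -> //].
  by rewrite ltnn.
have procE : proc D' (Qt ++ P) = h |: proc D (h::Qt).
  apply/setP => x; rewrite !inE mem_cat mP.
  case: (boolP (nw x)) => [nx|nx].
    have xh : x != h by (apply/eqP => xh; move: (nwN _ nx); rewrite xh Dh).
    by rewrite orbT andbF (nwN _ nx) (negbTE xh).
  rewrite (Dnnw _ nx) orbF; case: (eqVneq x h) => [->|xh] /=; first by rewrite Dh hQt.
  by [].
have inQ : forall x, x \in Qt -> x \in h::Qt by move=> x xQ; rewrite inE xQ orbT.
have hnp : h \notin proc D (h::Qt) by rewrite inE mem_head andbF.
split; last by rewrite procE cardsU1 hnp.
split.
- move=> x; case: (boolP (nw x)) => [nx|nx]; last by rewrite Dnnw.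
  by rewrite Dnw // -J0 (nwN _ nx).
- rewrite cat_uniq uQt uP andbT /=; apply/hasPn => x; rewrite mP => /nwN Dx.
  by apply/negP => xQ; have := J2 x; rewrite inE xQ orbT Dx => /(_ isT).
- move=> x; rewrite mem_cat => /orP [xQ|]; last by rewrite mP => /Dnw ->.
  by have H := J2 x; rewrite inE xQ orbT in H; rewrite Dmono ?H.
- exists k0; split; [|split].
  + move=> x; rewrite mem_cat => /orP [xQ|]; last by rewrite mP => /Dnw ->; by exists k0.+1; rewrite ?leqnSn ?leqnn.
    have [d Dx /andP [_ dk]] := Qin x (inQ _ xQ); exists d; first by rewrite Dmono Dx.
    by have := pwh x xQ; rewrite Dh Dx /= => ->; apply: leq_trans dk _.
  + rewrite pairwise_cat; apply/and3P; split.
    * apply/allrelP => x y xQ; rewrite mP => /Dnw ->.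
      have [d Dx _] := Qin x (inQ _ xQ); rewrite Dmono Dx //=; exact: bound Dx.
    * have eqr : {in mem Qt &, (fun x y => leo (D' x) (D' y)) =2 (fun x y => leo (D x) (D y))}.
        move=> x y xQ yQ; rewrite !Dmono //.
          by have := J2 y; rewrite inE yQ orbT => /(_ isT).
        by have := J2 x; rewrite inE xQ orbT => /(_ isT).
      by rewrite (eq_in_pairwise eqr) //; apply/allP => x.
    * apply: pairwise_all => x y; rewrite !mP => /Dnw -> /Dnw ->; exact: leo_refl.
  + move=> y; rewrite mem_cat negb_or mP => Hy /andP [yQ ny]; rewrite (Dnnw _ ny).
    case: (eqVneq y h) => [->|yh]; first by rewrite Dh /= leqnn.
    rewrite (Dnnw _ ny) in Hy; have := Qproc y Hy; rewrite inE negb_or yh yQ => /(_ isT).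
    by case: (D y) => // d /= H; apply: leq_trans H kqk0.
- move=> x k; case: (boolP (nw x)) => [nx|nx]; last first.
    rewrite (Dnnw _ nx) => /J4 [a xa Ha]; exists a => // b xb.
    by have := Ha b xb; case E: (D (a,b)) => [d|] //= H; rewrite Dmono ?E.
  rewrite Dnw // => -[<-]; exists sp; first by rewrite nbrP_sym; case/andP: nx => /andP [] /andP [].
  move=> b xb; case/andP: nx => /andP [/andP [_ /existsPn Hx] _] _.
  have := Hx b; rewrite xb /= /gto negbK => H.
  by rewrite Dmono //; move: H; case: (D (sp,b)).
- move=> x k; rewrite mem_cat negb_or mP => Dx /andP [xQ nx] ne xne H np xnp.
  rewrite (Dnnw _ nx) in Dx.
  case: (eqVneq x h) => [xh|xh].
    subst x; rewrite Dh in Dx; case: Dx => Ek; subst k.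
    case E: (D (np,ne)) => [d|].
      by rewrite Dmono ?E //=; exact: bound E.
    suff nnp : nw (np,ne) by rewrite Dnw //= leqnn.
    rewrite /nw /newD /= xne /= E eqxx andbT xnp andbT.
    apply/existsPn => ne'; apply/negP => /andP [nn' g].
    have := leoD' _ _ (H ne' nn') (leqnn _); move: g; rewrite /gto => /negP; exact.
  have xQ' : x \notin h::Qt by rewrite inE negb_or xh xQ.
  have kk0 : (k <= k0)%N.
    by have := Qproc x; rewrite Dx => /(_ isT xQ') /= H'; apply: leq_trans H' kqk0.
  have H' : forall ne', nbr adj ne ne' -> leo (D (x.1,ne')) (Some k).
    by move=> ne' nn'; apply: leoD' (H ne' nn') kk0.
  have := J5 x k Dx xQ' ne xne H' np xnp.
  by case E: (D (np,ne)) => [d|] //= Hd; rewrite Dmono ?E.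
Qed.

Lemma init_inv : Inv (D_init f) (Q_init f).
Proof.
have memQ : forall x, (x \in Q_init f) = f x by move=> x; rewrite mem_filter mem_enum andbT.
split.
- by move=> x; rewrite /D_init; case: (f x).
- by rewrite filter_uniq // enum_uniq.
- by move=> x; rewrite memQ /D_init => ->.
- exists 0%N; split; [|split].
  + by move=> x; rewrite memQ /D_init => ->; exists 0%N.
  + by apply: pairwise_all => x y; rewrite !memQ /D_init => -> ->.
  + by move=> y; rewrite memQ /D_init; case: (f y).
- by move=> x k; rewrite /D_init; case: (f x).
- by move=> x k; rewrite memQ /D_init; case: (f x).
Qed.

Lemma iter_inv n :
  Inv (iter n (@bfs_step V adj m) (D_init f, Q_init f)).1 (iter n (@bfs_step V adj m) (D_init f, Q_init f)).2 /\
  ((iter n (@bfs_step V adj m) (D_init f, Q_init f)).2 = [::] \/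
   (n <= #|proc (iter n (@bfs_step V adj m) (D_init f, Q_init f)).1 (iter n (@bfs_step V adj m) (D_init f, Q_init f)).2|)%N).
Proof.
elim: n => [|n [IH1 IH2]]; first by split; [exact: init_inv | right].
rewrite iterS; set r := iter n _ _ in IH1 IH2 *.
case: r IH1 IH2 => D Q /= IH1 IH2.
case: Q IH1 IH2 => [|[sp se] Qt] IH1 IH2; first by rewrite /=; split => //; left.
have [Hi Hc] := step_inv IH1; split => //.
case: IH2 => // IH2; case E: (bfs_step adj (D, (sp, se) :: Qt)).2 => [|y Q']; first by left.
by right; rewrite -E Hc ltnS.
Qed.

Lemma Dalg_inv : Inv (Dalg adj f) [::].
Proof.
have [Hi Hc] := iter_inv #|{: state}|.
suff E : (iter #|{: state}| (@bfs_step V adj m) (D_init f, Q_init f)).2 = [::].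
  by rewrite /Dalg; rewrite E in Hi.
case: Hc => // Hc; move: Hi Hc.
case: (iter _ _ _) => D [|y Q] //= Hi Hc.
have : (#|proc D (y::Q)| <= #|[set~ y]|)%N.
  apply: subset_leq_card; apply/fintype.subsetP => x; rewrite !inE; case/andP => _; rewrite negb_or; by case/andP => ->.
rewrite cardsC1 => H; have := leq_trans Hc H.
have : (0 < #|{: state}|)%N by apply/card_gt0P; exists y.
by case: #|_| => // k _; rewrite /= ltnn.
Qed.

Lemma DF0 x : (Dalg adj f x == Some 0%N) = f x.
Proof. exact: (I0 Dalg_inv). Qed.

Lemma need1 x k : Dalg adj f x = Some k.+1 ->
  exists2 a, nbrP adj x.1 a & forall b, nbr adj x.2 b -> leo (Dalg adj f (a,b)) (Some k).
Proof. exact: (I4 Dalg_inv). Qed.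

Lemma need2 sp se a : nbrP adj sp a ->
  exists2 b, nbr adj se b & leo (Dalg adj f (sp,se)) (omap succn (Dalg adj f (a,b))).
Proof.
move=> spa; set D := Dalg adj f.
case: (boolP [exists b, nbr adj se b && (D (a,b) == None)]).
  by case/existsP => b /andP [sb /eqP Db]; exists b => //; rewrite Db leo_None.
move/existsPn => Hfin.
have sse : nbr adj se se by rewrite /nbr eqxx.
case: (@arg_maxnP V se (nbr adj se) (fun b => odflt 0%N (D (a,b))) sse) => b sb Hb.
exists b => //.
case Eb: (D (a,b)) => [kb|]; last by have := Hfin b; rewrite sb Eb.
have := I5 Dalg_inv (x := (a,b)) Eb (isT : (a,b) \notin [::]) (ne := se); rewrite /= nbr_sym sb => /(_ isT).
have H : forall ne', nbr adj se ne' -> leo (D (a,ne')) (Some kb).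
  move=> ne' sne'; have := Hfin ne'; rewrite sne' /=; case E: (D (a,ne')) => [d|] // _.
  by have := Hb ne' sne'; rewrite E Eb.
move=> /(_ H sp); rewrite nbrP_sym spa => /(_ isT); exact.
Qed.

End BFS.

Lemma leo_omax_l x y : leo x (omax x y).
Proof. by rewrite /omax; case: ifP => // _; exact: leo_refl. Qed.
Lemma leo_omax_r x y : leo y (omax x y).
Proof. rewrite /omax; case: ifP => [_|H]; first exact: leo_refl.
by have := leo_total x y; rewrite H. Qed.
Lemma leo_omin_l x y : leo (omin x y) x.
Proof. rewrite /omin; case: ifP => [_|H]; first exact: leo_refl.
by have := leo_total x y; rewrite H. Qed.
Lemma leo_omin_r x y : leo (omin x y) y.
Proof. by rewrite /omin; case: ifP => [->|_] //; exact: leo_refl. Qed.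

Section Big.
Variable V : finType.
Variable adj : rel V.
Variable m : nat.
Local Notation pos := {ffun 'I_m -> V}.

Lemma maxD_le (D : Dmap V m) (a : pos) se x :
  (forall b, nbr adj se b -> leo (D (a,b)) x) -> leo (maxD adj D a se) x.
Proof.
move=> H; rewrite /maxD; apply: (big_ind (fun y => leo y x)) => //.
- by case: x {H}.
- by move=> y1 y2 h1 h2; rewrite /omax; case: ifP.
Qed.

Lemma le_maxD (D : Dmap V m) (a : pos) se b :
  nbr adj se b -> leo (D (a,b)) (maxD adj D a se).
Proof.
move=> sb; rewrite /maxD; have : b \in index_enum V by rewrite mem_index_enum.
elim: (index_enum V) => // c r IH; rewrite in_cons big_cons.
case: (eqVneq b c) => [<- _|bc /= br]; first by rewrite sb; exact: leo_omax_l.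
case: ifP => _; last exact: IH.
exact: leo_trans (IH br) (leo_omax_r _ _).
Qed.

Lemma minD_ge (D : Dmap V m) (sp : pos) ne x :
  (forall a, nbrP adj sp a -> leo x (D (a,ne))) -> leo x (minD adj D sp ne).
Proof.
move=> H; rewrite /minD; apply: (big_ind (fun y => leo x y)) => //.
- exact: leo_None.
- by move=> y1 y2 h1 h2; rewrite /omin; case: ifP.
Qed.

Lemma minD_le (D : Dmap V m) (sp : pos) ne a :
  nbrP adj sp a -> leo (minD adj D sp ne) (D (a,ne)).
Proof.
move=> sa; rewrite /minD; have : a \in index_enum {ffun 'I_m -> V} by rewrite mem_index_enum.
elim: (index_enum _) => // c r IH; rewrite in_cons big_cons.
case: (eqVneq a c) => [<- _|ac /= ar]; first by rewrite sa; exact: leo_omin_l.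
case: ifP => _; last exact: IH.
exact: leo_trans (leo_omin_r _ _) (IH ar).
Qed.
End Big.

Section Val.
Variable V : finType.
Variable adj : rel V.
Variable m : nat.
Local Notation pos := {ffun 'I_m -> V}.
Local Notation state := (pos * V)%type.
Variable f : state -> bool.
Variable R : realType.
Variable gamma : R.
Hypothesis g0 : 0 < gamma.
Hypothesis g1 : gamma < 1.
Variable mu : state -> pos -> R.
Variable nu : state -> V -> R.
Hypothesis Hmu : pursuer_policy adj mu.
Hypothesis Hnu : evader_policy adj nu.

Local Notation Vn := (Vn f gamma mu nu).

Lemma Vn0 s : Vn 0 s = if f s then 1 else 0.
Proof. by []. Qed.
Lemma VnS n s : Vn n.+1 s = if f s then 1 else
  gamma * \sum_(a : pos) \sum_(b : V) mu s a * nu s b * Vn n (a, b).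
Proof. by []. Qed.

Lemma sum1 s : \sum_(a : pos) \sum_(b : V) mu s a * nu s b = 1.
Proof.
have [_ [_ Sm]] := Hmu s; have [_ [_ Sn]] := Hnu s.
rewrite -[RHS]Sm; apply: eq_bigr => a _; by rewrite -mulr_sumr Sn mulr1.
Qed.

Lemma sum_le (X : pos -> V -> R) c s :
  (forall a b, mu s a != 0 -> nu s b != 0 -> X a b <= c) ->
  \sum_(a : pos) \sum_(b : V) mu s a * nu s b * X a b <= c.
Proof.
move=> H; have [m0 _] := Hmu s; have [n0 _] := Hnu s.
rewrite -[leRHS]mul1r -(sum1 s) mulr_suml; apply: ler_sum => a _; rewrite mulr_suml.
apply: ler_sum => b _.
case: (eqVneq (mu s a) 0) => [->|ha]; first by rewrite !mul0r.
case: (eqVneq (nu s b) 0) => [->|hb]; first by rewrite !mulr0 !mul0r.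
by apply: ler_wpM2l; [apply: mulr_ge0 | apply: H].
Qed.

Lemma sum_ge (X : pos -> V -> R) c s :
  (forall a b, mu s a != 0 -> nu s b != 0 -> c <= X a b) ->
  c <= \sum_(a : pos) \sum_(b : V) mu s a * nu s b * X a b.
Proof.
move=> H; have [m0 _] := Hmu s; have [n0 _] := Hnu s.
rewrite -[leLHS]mul1r -(sum1 s) mulr_suml; apply: ler_sum => a _; rewrite mulr_suml.
apply: ler_sum => b _.
case: (eqVneq (mu s a) 0) => [->|ha]; first by rewrite !mul0r.
case: (eqVneq (nu s b) 0) => [->|hb]; first by rewrite !mulr0 !mul0r.
by apply: ler_wpM2l; [apply: mulr_ge0 | apply: H].
Qed.

Lemma sum_scale (X : pos -> V -> R) s :
  gamma * \sum_(a : pos) \sum_(b : V) mu s a * nu s b * X a b =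
  \sum_(a : pos) \sum_(b : V) mu s a * nu s b * (gamma * X a b).
Proof.
rewrite mulr_sumr; apply: eq_bigr => a _; rewrite mulr_sumr; apply: eq_bigr => b _.
by rewrite mulrCA.
Qed.

Lemma Vn_ge0 n s : 0 <= Vn n s.
Proof.
elim: n s => [|n IH] s; first by rewrite Vn0; case: (f s).
rewrite VnS; case: (f s) => //; apply: mulr_ge0; first exact: ltW.
have [m0 _] := Hmu s; have [n0 _] := Hnu s.
by apply: sumr_ge0 => a _; apply: sumr_ge0 => b _; rewrite !mulr_ge0.
Qed.

Lemma lemA_fin (W : state -> R) :
  (forall s, 0 <= W s) -> (forall s, f s -> 1 <= W s) ->
  (forall s, ~~ f s -> forall a b, mu s a != 0 -> nu s b != 0 -> gamma * W (a,b) <= W s) ->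
  forall n s, Vn n s <= W s.
Proof.
move=> W0 W1 WS; elim => [|n IH] s.
  by rewrite Vn0; case: (boolP (f s)) => fs; [exact: W1|].
rewrite VnS; case: (boolP (f s)) => fs; first exact: W1.
rewrite sum_scale; apply: sum_le => a b ha hb.
apply: le_trans (WS s fs a b ha hb); apply: ler_wpM2l; [exact: ltW|exact: IH].
Qed.

Lemma lemB_fin (W : state -> R) :
  (forall s, W s <= 1) ->
  (forall s, ~~ f s -> forall a b, mu s a != 0 -> nu s b != 0 -> W s <= gamma * W (a,b)) ->
  forall n s, W s - gamma ^+ n <= Vn n s.
Proof.
move=> W1 WS; elim => [|n IH] s.
  by apply: le_trans (Vn_ge0 0 s); rewrite expr0 subr_le0.
rewrite VnS; case: (boolP (f s)) => fs.
  by rewrite lerBlDr (le_trans (W1 s)) // lerDl exprn_ge0 // ltW.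
rewrite sum_scale; apply: sum_ge => a b ha hb.
apply: le_trans (_ : gamma * (W (a,b) - gamma ^+ n) <= _).
  by rewrite mulrBr -exprS lerB // WS.
by apply: ler_wpM2l; [exact: ltW|exact: IH].
Qed.

Lemma Vn_le1 n s : Vn n s <= 1.
Proof.
apply: (lemA_fin (W := fun _ => 1)) => //= t _ a b _ _.
by rewrite mulr1 ltW.
Qed.

Lemma Vn_mono n s : Vn n s <= Vn n.+1 s.
Proof.
elim: n s => [|n IH] s.
  by rewrite Vn0; case: (boolP (f s)) => fs; [rewrite VnS fs|apply: Vn_ge0].
rewrite VnS [Vn n.+2 s]VnS; case: (f s) => //.
apply: ler_wpM2l; first exact: ltW.
have [m0 _] := Hmu s; have [n0 _] := Hnu s.
apply: ler_sum => a _; apply: ler_sum => b _; apply: ler_wpM2l; first by rewrite mulr_ge0.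
exact: IH.
Qed.

Lemma Vn_cvg s : cvgn ((fun n => Vn n s) : R ^nat).
Proof.
apply: nondecreasing_is_cvgn; first by apply/nondecreasing_seqP => n; exact: Vn_mono.
by exists 1 => _ [n _ <-]; exact: Vn_le1.
Qed.

Lemma Vn_le_value n s : Vn n s <= value f gamma mu nu s.
Proof.
apply: (nondecreasing_cvgn_le (u_ := fun n => Vn n s)); last exact: Vn_cvg.
by apply/nondecreasing_seqP => k; exact: Vn_mono.
Qed.

Lemma lemA (W : state -> R) :
  (forall s, 0 <= W s) -> (forall s, f s -> 1 <= W s) ->
  (forall s, ~~ f s -> forall a b, mu s a != 0 -> nu s b != 0 -> gamma * W (a,b) <= W s) ->
  forall s, value f gamma mu nu s <= W s.
Proof.
move=> W0 W1 WS s; apply: limr_le; first exact: Vn_cvg.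
by apply: nearW => n; apply: lemA_fin.
Qed.

Lemma lemB (W : state -> R) :
  (forall s, W s <= 1) ->
  (forall s, ~~ f s -> forall a b, mu s a != 0 -> nu s b != 0 -> W s <= gamma * W (a,b)) ->
  forall s, W s <= value f gamma mu nu s.
Proof.
move=> W1 WS s.
have H : ((fun n => value f gamma mu nu s + gamma ^+ n) @ \oo --> value f gamma mu nu s + 0)%classic.
  apply: cvgD; first exact: cvg_cst.
  by apply: cvg_expr; rewrite ger0_norm ?ltW.
rewrite -[X in _ <= X]addr0 -(cvg_lim _ H) //; apply: limr_ge; first exact: (cvgP _ H).
apply: nearW => n; rewrite -lerBlDr.
by apply: le_trans (lemB_fin W1 WS n s) (Vn_le_value n s).
Qed.

Lemma value_ge0 s : 0 <= value f gamma mu nu s.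
Proof. exact: le_trans (Vn_ge0 0 s) (Vn_le_value 0 s). Qed.
Lemma value_le1 s : value f gamma mu nu s <= 1.
Proof. by apply: (lemA (W := fun _ => 1)) => //= t _ a b _ _; rewrite mulr1 ltW. Qed.
Lemma value_term s : f s -> value f gamma mu nu s = 1.
Proof.
move=> fs; apply/le_anti; rewrite value_le1 /=.
by have := Vn_le_value 0 s; rewrite Vn0 fs.
Qed.

End Val.

Section Det.
Variable V : finType.
Variable adj : rel V.
Variable m : nat.
Local Notation pos := {ffun 'I_m -> V}.
Local Notation state := (pos * V)%type.
Variable f : state -> bool.
Variable R : realType.
Variable gamma : R.
Hypothesis g0 : 0 < gamma.
Hypothesis g1 : gamma < 1.

Lemma det_supp (T : finType) (p : state -> T) s a : det_pol R p s a != 0 -> a = p s.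
Proof. rewrite /det_pol; case: (eqVneq a (p s)) => //= _; by rewrite eqxx. Qed.

Lemma det_sum1 (T : finType) (p : state -> T) s : \sum_(a : T) det_pol R p s a = 1.
Proof.
rewrite (bigD1 (p s)) //= /det_pol eqxx big1 ?addr0 // => a /negbTE ->; done.
Qed.

Lemma det_pursuer (p : state -> pos) : (forall s, nbrP adj s.1 (p s)) ->
  pursuer_policy adj (det_pol R p).
Proof.
move=> Hp s; split; first by move=> a; rewrite /det_pol ler0n.
split; last exact: det_sum1.
by move=> a /det_supp ->.
Qed.

Lemma det_evader (q : state -> V) : (forall s, nbr adj s.2 (q s)) ->
  evader_policy adj (det_pol R q).
Proof.
move=> Hq s; split; first by move=> a; rewrite /det_pol ler0n.
split; last exact: det_sum1.
by move=> a /det_supp ->.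
Qed.

Lemma pursuer_det_nbr (p : state -> pos) : pursuer_policy adj (det_pol R p) ->
  forall s, nbrP adj s.1 (p s).
Proof.
move=> Hp s; have [_ [H _]] := Hp s; apply: H; by rewrite /det_pol eqxx oner_neq0.
Qed.

Lemma evader_det_nbr (q : state -> V) : evader_policy adj (det_pol R q) ->
  forall s, nbr adj s.2 (q s).
Proof.
move=> Hq s; have [_ [H _]] := Hq s; apply: H; by rewrite /det_pol eqxx oner_neq0.
Qed.

Lemma sum_det (X : state -> R) (p : state -> pos) (q : state -> V) s :
  \sum_(a : pos) \sum_(b : V) det_pol R p s a * det_pol R q s b * X (a,b) = X (p s, q s).
Proof.
rewrite (bigD1 (p s)) //= [\sum_(i | i != p s) _]big1 ?addr0; last first.
  move=> a /negbTE H; rewrite /det_pol H; apply: big1 => b _; by rewrite !mul0r.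
rewrite (bigD1 (q s)) //= [\sum_(i | i != q s) _]big1 ?addr0; last first.
  move=> b /negbTE H; rewrite /det_pol H; by rewrite mulr0 mul0r.
by rewrite /det_pol !eqxx !mul1r.
Qed.

Lemma bellman_det (p : state -> pos) (q : state -> V) :
  pursuer_policy adj (det_pol R p) -> evader_policy adj (det_pol R q) ->
  forall s, value f gamma (det_pol R p) (det_pol R q) s =
    if f s then 1 else gamma * value f gamma (det_pol R p) (det_pol R q) (p s, q s).
Proof.
move=> Pp Pq s; case: (boolP (f s)) => fs; first exact: value_term.
have h1 : ([sequence Vn f gamma (det_pol R p) (det_pol R q) n.+1 s]_n @ \oo -->
           value f gamma (det_pol R p) (det_pol R q) s)%classic.
  have := @Vn_cvg _ _ _ f _ _ g0 g1 _ _ Pp Pq s; rewrite -cvg_shiftS; exact.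
have h2 : ((fun n => gamma * Vn f gamma (det_pol R p) (det_pol R q) n (p s, q s)) @ \oo -->
           gamma * value f gamma (det_pol R p) (det_pol R q) (p s, q s))%classic.
  by apply: cvgMl_tmp; exact: Vn_cvg.
have e : [sequence Vn f gamma (det_pol R p) (det_pol R q) n.+1 s]_n =
         (fun n => gamma * Vn f gamma (det_pol R p) (det_pol R q) n (p s, q s)).
  by apply: boolp.funext => n /=; rewrite (negbTE fs) sum_det.
rewrite e in h1; exact: cvg_unique h1 h2.
Qed.
End Det.

Section Gpow.
Variable R : realType.
Variable gamma : R.
Hypothesis g0 : 0 < gamma.
Hypothesis g1 : gamma < 1.

Lemma gpow_ge0 x : 0 <= gpow gamma x.
Proof. by case: x => [n|] //=; rewrite exprn_ge0 // ltW. Qed.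
Lemma gpow_le1 x : gpow gamma x <= 1.
Proof. by case: x => [n|] //=; rewrite exprn_ile1 // ltW. Qed.
Lemma gpowS x : gpow gamma (omap succn x) = gamma * gpow gamma x.
Proof. by case: x => [n|] /=; rewrite ?exprS ?mulr0. Qed.
Lemma gpow_leo x y : leo x y -> gpow gamma y <= gpow gamma x.
Proof.
case: x y => [a|] [b|] //=.
- by move=> ab; rewrite ler_iXn2l.
- by move=> _; rewrite exprn_ge0 // ltW.
Qed.
Lemma gpow_leoP x y : gpow gamma y <= gpow gamma x -> leo x y.
Proof.
case: x y => [a|] [b|] //=.
- by rewrite ler_iXn2l.
- by rewrite leNgt exprn_gt0.
Qed.
End Gpow.

Theorem theorem1 (R : realType) (V : finType) (adj : rel V) (m : nat)
    (f : {ffun 'I_m -> V} * V -> bool) (gamma : R)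
    (mu : {ffun 'I_m -> V} * V -> {ffun 'I_m -> V})
    (nu : {ffun 'I_m -> V} * V -> V) :
  symmetric adj ->
  (0 < m)%N ->
  0 < gamma < 1 ->
  is_mu_of adj (Dalg adj f) mu ->
  is_nu_of adj (Dalg adj f) nu ->
  has_pure_NE adj f gamma ->
  (forall (muS : {ffun 'I_m -> V} * V -> {ffun 'I_m -> V} -> R)
          (nuS : {ffun 'I_m -> V} * V -> V -> R),
      is_NE adj f gamma muS nuS ->
      forall s, value f gamma muS nuS s = gpow gamma (Dalg adj f s)) /\
  is_NE adj f gamma (det_pol R mu) (det_pol R nu).
Proof.
move=> adj_sym _ /andP [g0 g1] Hmu Hnu [p [q NEpq]].
set D := Dalg adj f.
pose U := fun s => gpow gamma (D s).
have U0 : forall s, 0 <= U s by move=> s; rewrite /U; apply: gpow_ge0.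
have U1 : forall s, U s <= 1 by move=> s; rewrite /U; apply: gpow_le1.
have Uterm : forall s, f s -> U s = 1.
  by move=> s fs; have := DF0 adj_sym f s; rewrite fs => /eqP; rewrite /U /D => ->.
have Dnt : forall s, ~~ f s -> D s = None \/ exists k, D s = Some k.+1.
  move=> s fs; case E: (D s) => [[|k]|]; [|by right; exists k|by left].
  by have := DF0 adj_sym f s; rewrite -/D E eqxx (negbTE fs).
have [Pp [Pq NEc]] := NEpq.
have pN := pursuer_det_nbr Pp; have qN := evader_det_nbr Pq.
pose W := value f gamma (det_pol R p) (det_pol R q).
have BW : forall s, W s = if f s then 1 else gamma * W (p s, q s).
  move=> s; rewrite /W; apply: bellman_det => //.
have W0 : forall s, 0 <= W s by move=> s; apply: value_ge0.
have W1 : forall s, W s <= 1 by move=> s; apply: value_le1.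
have Hi : forall s, ~~ f s -> forall a, nbrP adj s.1 a -> gamma * W (a, q s) <= W s.
  move=> s fs a sa; rewrite leNgt; apply/negP => Hlt.
  pose p' := fun t => if t == s then a else p t.
  have p's : p' s = a by rewrite /p' eqxx.
  have p'N : forall t, nbrP adj t.1 (p' t).
    by move=> t; rewrite /p'; case: eqP => [->|_] //; exact: pN.
  have Pp' := det_pursuer R p'N.
  have Hle := (NEc _ _ Pp' Pq s).1.
  have B' : forall t, W t <= value f gamma (det_pol R p') (det_pol R q) t.
    apply: (lemB g0 g1 Pp' Pq) => // t ft a' b' /det_supp -> /det_supp ->.
    rewrite /p'; case: eqP => [->|_]; first exact: ltW.
    by rewrite {1}BW (negbTE ft).
  have E' := bellman_det f g0 g1 Pp' Pq s; rewrite (negbTE fs) p's in E'.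
  have H2 : gamma * W (a, q s) <= value f gamma (det_pol R p') (det_pol R q) s.
    by rewrite E'; apply: ler_wpM2l; [exact: ltW | exact: B'].
  by have := lt_le_trans Hlt (le_trans H2 Hle); rewrite ltxx.
have Hii : forall s, ~~ f s -> forall b, nbr adj s.2 b -> W s <= gamma * W (p s, b).
  move=> s fs b sb; rewrite leNgt; apply/negP => Hlt.
  pose q' := fun t => if t == s then b else q t.
  have q's : q' s = b by rewrite /q' eqxx.
  have q'N : forall t, nbr adj t.2 (q' t).
    by move=> t; rewrite /q'; case: eqP => [->|_] //; exact: qN.
  have Pq' := det_evader R q'N.
  have Hle := (NEc _ _ Pp Pq' s).2.
  have A' : forall t, value f gamma (det_pol R p) (det_pol R q') t <= W t.
    apply: (lemA g0 g1 Pp Pq') => //.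
      by move=> t ft; rewrite BW ft.
    move=> t ft a' b' /det_supp -> /det_supp ->.
    rewrite /q'; case: eqP => [->|_]; first exact: ltW.
    by rewrite [X in _ <= X]BW (negbTE ft).
  have E' := bellman_det f g0 g1 Pp Pq' s; rewrite (negbTE fs) q's in E'.
  have H2 : value f gamma (det_pol R p) (det_pol R q') s <= gamma * W (p s, b).
    by rewrite E'; apply: ler_wpM2l; [exact: ltW | exact: A'].
  by have := lt_le_trans Hlt (le_trans Hle H2); rewrite ltxx.
have WU : forall s, W s = U s.
  move=> s; pose e := fun t => `|W t - U t|.
  pose t0 := [arg max_(t > s) e t]%O.
  have Ht0 : forall t, e t <= e t0.
    by rewrite /t0; case: arg_maxP => //= i _ Hi' t; exact: Hi'.
  have key : forall t, e t <= gamma * e t0.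
    move=> [sp se]; set t := (sp, se); case: (boolP (f t)) => ft.
      by rewrite /e BW ft Uterm // subrr normr0; exact: mulr_ge0 (ltW g0) (normr_ge0 _).
    rewrite ler_norml; apply/andP; split.
    - rewrite lerNl opprB.
      case: (Dnt t ft) => [Dt | [k Dt]].
        rewrite /U Dt /= sub0r; apply: le_trans (_ : 0 <= _).
          by rewrite oppr_le0.
        exact: mulr_ge0 (ltW g0) (normr_ge0 _).
      have [a ta Ha] := need1 adj_sym Dt.
      have Ua : U t <= gamma * U (a, q t).
        rewrite /U Dt -[Some k.+1]/(omap succn (Some k)) gpowS.
        apply: ler_wpM2l; [exact: ltW | apply: gpow_leo => //; exact: Ha].
      have Wa := Hi t ft a ta.
      apply: le_trans (_ : gamma * U (a, q t) - gamma * W (a, q t) <= _); first exact: lerB.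
      rewrite -mulrBr; apply: ler_wpM2l; first exact: ltW; apply: le_trans (Ht0 (a, q t)).
      by rewrite /e distrC; exact: ler_norm.
    - have [b tb Hb] := need2 adj_sym f se (pN t).
      have Ub : gamma * U (p t, b) <= U t.
        by rewrite /U -gpowS; apply: gpow_leo.
      have Wb := Hii t ft b tb.
      apply: le_trans (_ : gamma * W (p t, b) - gamma * U (p t, b) <= _); first exact: lerB.
      rewrite -mulrBr; apply: ler_wpM2l; first exact: ltW; apply: le_trans (Ht0 (p t, b)).
      exact: ler_norm.
  have e0 : e t0 <= 0.
    have H := key t0; have : (1 - gamma) * e t0 <= 0 by rewrite mulrBl mul1r subr_le0.
    by rewrite pmulr_rle0 // subr_gt0.
  have : e s <= 0 := le_trans (Ht0 s) e0.
  by rewrite /e normr_le0 subr_eq0 => /eqP.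
split.
  move=> muS nuS [PmuS [PnuS NES]] s; rewrite -/D -/(U s) -WU.
  apply/le_anti/andP; split.
    exact: le_trans (NES _ _ PmuS Pq s).2 (NEc _ _ PmuS Pq s).1.
  exact: le_trans (NEc _ _ Pp PnuS s).2 (NES _ _ Pp PnuS s).1.
have muN : forall s, nbrP adj s.1 (mu s) by move=> s; case: (Hmu s).
have nuN : forall s, nbr adj s.2 (nu s) by move=> s; case: (Hnu s).
have Pmu := det_pursuer R muN; have Pnu := det_evader R nuN.
have S1 : forall t, ~~ f t -> forall b, nbr adj t.2 b -> U t <= gamma * U (mu t, b).
  move=> t ft b tb; case: (Dnt t ft) => [Dt|[k Dt]].
    by rewrite /U Dt /=; exact: mulr_ge0 (ltW g0) (U0 _).
  have [a ta Ha] := need1 adj_sym Dt.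
  have Hm : leo (maxD adj D (mu t) t.2) (Some k).
    exact: leo_trans ((Hmu t).2 a ta) (maxD_le Ha).
  have H := leo_trans (le_maxD D (mu t) tb) Hm.
  rewrite /U Dt -[Some k.+1]/(omap succn (Some k)) gpowS.
  apply: ler_wpM2l; [exact: ltW | apply: gpow_leo => //; exact: H].
have S2 : forall t, ~~ f t -> forall a, nbrP adj t.1 a -> gamma * U (a, nu t) <= U t.
  move=> t ft a ta.
  have Hq : forall a', nbrP adj t.1 a' -> leo (D t) (omap succn (D (a', q t))).
    move=> a' ta'; apply: (gpow_leoP g0 g1); rewrite gpowS.
    by have := Hi t ft a' ta'; rewrite !WU.
  have [x Dx] : exists x, D t = omap succn x.
    by case: (Dnt t ft) => [Dt|[k Dt]]; [exists None | exists (Some k)]; rewrite Dt.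
  have H1 : forall a', nbrP adj t.1 a' -> leo x (D (a', q t)).
    by move=> a' ta'; rewrite -leoS -Dx; apply: Hq.
  have H2 := minD_ge H1.
  have H3 := leo_trans H2 ((Hnu t).2 (q t) (qN t)).
  have H4 := leo_trans H3 (minD_le D (nu t) ta).
  rewrite /U -gpowS; apply: gpow_leo => //; by rewrite Dx leoS.
have VU : forall s, value f gamma (det_pol R mu) (det_pol R nu) s = U s.
  move=> s; apply/le_anti/andP; split.
    apply: (lemA g0 g1 Pmu Pnu) => //; first by move=> t ft; rewrite Uterm.
    move=> t ft a b /det_supp -> /det_supp ->; exact: S2 t ft _ (muN t).
  apply: (lemB g0 g1 Pmu Pnu) => // t ft a b /det_supp -> /det_supp ->.
  exact: S1 t ft _ (nuN t).
split; [exact: Pmu | split; [exact: Pnu|]].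
move=> mu' nu' Pmu' Pnu' s; rewrite VU; split.
  apply: (lemA g0 g1 Pmu' Pnu) => //; first by move=> t ft; rewrite Uterm.
  move=> t ft a b ha /det_supp ->; have [_ [sup _]] := Pmu' t; exact: S2 t ft a (sup a ha).
apply: (lemB g0 g1 Pmu Pnu') => // t ft a b /det_supp -> hb.
have [_ [sup _]] := Pnu' t; exact: S1 t ft b (sup b hb).
Qed.
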